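(* For every graph $G$ and every integer $t\ge 1$, $f^-(t\cdot K_1+G)=f^-(G)$ and $f^+(t\cdot K_1+G)=f^+(G)$, where $t\cdot K_1$ denotes the edgeless graph on $t$ vertices.
   Context: All graphs are finite, simple, undirected and connected (except the edgeless graph $t\cdot K_1$ used in the join). $N[v]=N(v)\cup\{v\}$ is the closed neighbourhood. A chromatic colouring of $G$ is a proper vertex colouring $c:V(G)\to\{c_1,\dots,c_{\chi(G)}\}$. With respect to $c$, a vertex $v$ yields a rainbow neighbourhood if $N[v]$ contains a vertex of each colour $c_1,\dots,c_{\chi(G)}$; $r_\chi(G)$ is the number of such vertices, and $r^-_\chi(G)$, $r^+_\chi(G)$ are its minimum and maximum over all chromatic colourings of $G$. Fading: for a set $F\subseteq V(G)$ (a fade set), the vertices of $F$ receive a transparent colour $c^\circ$ not among $c_1,\dots,c_{\chi(G)}$; after fading, $v$ yields a rainbow neighbourhood iff for every $i$ some vertex of $N[v]\setminus F$ has colour $c_i$. The fading number $f^-(G)$ is the maximum $|F|$ over chromatic colourings $c$ attaining $r_\chi=r^-_\chi(G)$ and fade sets $F$ such that, after fading $F$, the number of vertices yielding rainbow neighbourhoods is still $r^-_\chi(G)$; $f^+(G)$ is defined analogously with $r^+_\chi(G)$. The join $G_1+G_2$ of vertex-disjoint graphs is $G_1\cup G_2$ together with all edges joining a vertex of $G_1$ to a vertex of $G_2$. *)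

(* Defs.v *)
From mathcomp Require Import all_boot.
Set Implicit Arguments. Unset Strict Implicit. Unset Printing Implicit Defensive.

Definition simple_connected_graph (T : finType) (e : rel T) : Prop :=
  [/\ symmetric e, irreflexive e, 0 < #|T| & forall x y, connect e x y].

Definition proper (T : finType) (e : rel T) k (c : {ffun T -> 'I_k}) : bool :=
  [forall x, forall y, e x y ==> (c x != c y)].

(* Chromatic number: least k admitting a proper k-colouring
   (k = #|T| always works for an irreflexive relation). *)
Definition chi (T : finType) (e : rel T) : nat :=
  find (fun k => [exists c : {ffun T -> 'I_k}, proper e c]) (iota 0 #|T|.+1).

Definition inN (T : finType) (e : rel T) (v u : T) : bool := (u == v) || e v u.

Definition rainbow (T : finType) (e : rel T) k (c : {ffun T -> 'I_k})
  (F : {set T}) (v : T) : bool :=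
  [forall i : 'I_k, exists u, [&& inN e v u, u \notin F & c u == i]].

Definition rcount (T : finType) (e : rel T) k (c : {ffun T -> 'I_k})
  (F : {set T}) : nat := #|[set v | rainbow e c F v]|.

Definition rnum (T : finType) (e : rel T) k (c : {ffun T -> 'I_k}) : nat :=
  rcount e c set0.

Definition rminus (T : finType) (e : rel T) : nat :=
  \big[minn/#|T|]_(c : {ffun T -> 'I_(chi e)} | proper e c) rnum e c.

Definition rplus (T : finType) (e : rel T) : nat :=
  \max_(c : {ffun T -> 'I_(chi e)} | proper e c) rnum e c.

Definition fminus (T : finType) (e : rel T) : nat :=
  \max_(c : {ffun T -> 'I_(chi e)} | proper e c && (rnum e c == rminus e))
    \max_(F : {set T} | rcount e c F == rminus e) #|F|.

Definition fplus (T : finType) (e : rel T) : nat :=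
  \max_(c : {ffun T -> 'I_(chi e)} | proper e c && (rnum e c == rplus e))
    \max_(F : {set T} | rcount e c F == rplus e) #|F|.

Definition join_rel (t : nat) {T : finType} (e : rel T) : rel ('I_t + T)%type :=
  fun x y => match x, y with
             | inl _, inl _ => false
             | inr a, inr b => e a b
             | _, _ => true
             end.
Arguments join_rel t {T} e _ _.

(* Main.v *)
Require Import Defs.
From mathcomp Require Import all_boot zify.
Require Import Defs.
Set Implicit Arguments. Unset Strict Implicit. Unset Printing Implicit Defensive.

Lemma chi_spec (T : finType) (e : rel T) : irreflexive e ->
  exists c : {ffun T -> 'I_(chi e)}, proper e c.
Proof.
move=> irr.
set P := (fun k => [exists c : {ffun T -> 'I_k}, proper e c]).
have Hhas : has P (iota 0 #|T|.+1).
  apply/hasP; exists #|T|; first by rewrite mem_iota add0n ltnS leqnn.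
  apply/existsP; exists [ffun x => enum_rank x].
  apply/forallP=> x; apply/forallP=> y; apply/implyP=> exy.
  rewrite !ffunE; apply/negP=> /eqP/enum_rank_inj exy'.
  by move: exy; rewrite exy' irr.
have := nth_find 0 Hhas.
rewrite nth_iota ?add0n; last by move: Hhas; rewrite has_find size_iota.
by move/existsP.
Qed.

Lemma chi_le (T : finType) (e : rel T) m (c : {ffun T -> 'I_m}) :
  proper e c -> chi e <= m.
Proof.
move=> pc; case: (leqP #|T|.+1 m) => hm.
  apply: leq_trans hm; have := find_size (fun k => [exists c : {ffun T -> 'I_k}, proper e c]) (iota 0 #|T|.+1); by rewrite size_iota.
rewrite leqNgt; apply/negP => hlt.
have := before_find 0 hlt; rewrite nth_iota // add0n.
by move/negbT/negP; apply; apply/existsP; exists c.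
Qed.

Lemma chi_comp (T : finType) (e : rel T) m (c : T -> 'I_m) (A : {set 'I_m}) :
  0 < #|T| -> (forall x, c x \in A) -> (forall x y, e x y -> c x != c y) ->
  chi e <= #|A|.
Proof.
move=> /card_gt0P [x0 _] cA pc.
apply: (@chi_le _ _ _ [ffun x => enum_rank_in (cA x0) (c x)]).
apply/forallP=> x; apply/forallP=> y; apply/implyP=> exy.
rewrite !ffunE; apply/negP=> /eqP E.
have := f_equal enum_val E; rewrite !enum_rankK_in // => E'.
by move: (pc _ _ exy); rewrite E' eqxx.
Qed.

Lemma bigmin_le (I : finType) (P : pred I) (F : I -> nat) idx i :
  P i -> \big[minn/idx]_(j | P j) F j <= F i.
Proof.
move=> Pi; rewrite -big_filter.
have : i \in [seq j <- index_enum I | P j] by rewrite mem_filter Pi mem_index_enum.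
elim: [seq j <- index_enum I | P j] => // a s IH.
rewrite inE big_cons => /orP [/eqP <-|/IH]; first exact: geq_minl.
by move=> h; apply: leq_trans h; apply: geq_minr.
Qed.

Lemma bigmin_idx (I : finType) (P : pred I) (F : I -> nat) idx :
  \big[minn/idx]_(j | P j) F j <= idx.
Proof. by elim/big_rec: _ => // i x _ h; rewrite geq_min h orbT. Qed.

Lemma rainbow_exists (T : finType) (e : rel T) (c : {ffun T -> 'I_(chi e)}) :
  simple_connected_graph e -> proper e c -> exists v, rainbow e c set0 v.
Proof.
case=> sym irr Tpos _ pc.
have pxy : forall x y, e x y -> c x != c y.
  by move=> x y exy; exact: (implyP (forallP (forallP pc x) y) exy).
have [/existsP //|/existsPn nr] := boolP [exists v, rainbow e c set0 v].
case/card_gt0P: (Tpos) => x0 _; set m0 := c x0.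
have hj : forall v, exists j : 'I_(chi e), (c v == m0) ==>
    ((j != m0) && ~~ [exists u, inN e v u && (c u == j)]).
  move=> v; case: eqP => [cv|_]; last by exists m0.
  have := nr v; rewrite /rainbow negb_forall => /existsP [j hj]; exists j.
  apply/andP; split.
    apply/negP => /eqP jm; apply: (negP hj); apply/existsP; exists v.
    by rewrite cv jm eqxx /inN eqxx in_set0.
  apply/negP; move=> /existsP [u /andP [hu cu]]; apply: (negP hj); apply/existsP; exists u.
  by rewrite hu in_set0 cu.
have [j hjP] := fin_all_exists hj.
have := @chi_comp T e _ (fun v => if c v == m0 then j v else c v) [set~ m0] Tpos.
rewrite cardsC1 card_ord.
have hlt := ltn_ord m0.
have key : chi e <= (chi e).-1 -> False by lia.
move=> H; exfalso; apply: key; apply: H.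
  move=> v; rewrite in_setC1; case: ifP => h; last by rewrite h.
  by case/andP: (implyP (hjP v) h).
move=> x y exy; case hx: (c x == m0); case hy: (c y == m0).
- by move: (pxy x y exy); rewrite (eqP hx) (eqP hy) eqxx.
- apply/negP; move=> /eqP E; case/andP: (implyP (hjP x) hx) => _ /negP; apply.
  by apply/existsP; exists y; rewrite /inN exy orbT E eqxx.
- apply/negP; move=> /eqP E; case/andP: (implyP (hjP y) hy) => _ /negP; apply.
  by apply/existsP; exists x; rewrite /inN -sym exy orbT E eqxx.
- exact: pxy.
Qed.

Lemma card_split (I T : finType) (P : pred (I + T)) :
  #|[set v | P v]| = #|[set i | P (inl i)]| + #|[set x | P (inr x)]|.
Proof.
rewrite -!sum1_card.
rewrite (big_sumType _ (fun v => v \in [set v | P v])) /=.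
by congr (_ + _); apply: eq_bigl => i; rewrite !inE.
Qed.

Definition cH (T : finType) t k (a : 'I_k.+1) (cG : {ffun T -> 'I_k}) :
  {ffun ('I_t + T) -> 'I_k.+1} :=
  [ffun u => match u with inl _ => a | inr x => lift a (cG x) end].

Lemma properP (T : finType) (e : rel T) k (c : {ffun T -> 'I_k}) :
  reflect (forall x y, e x y -> c x != c y) (proper e c).
Proof.
apply: (iffP idP).
  by move=> pc x y exy; exact: (implyP (forallP (forallP pc x) y) exy).
by move=> h; apply/forallP=> x; apply/forallP=> y; apply/implyP; apply: h.
Qed.

Lemma proper_cH (T : finType) (e : rel T) t k (a : 'I_k.+1) (cG : {ffun T -> 'I_k}) :
  proper e cG = proper (join_rel t e) (cH t a cG).
Proof.
apply/properP/properP => h.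
  move=> [i|x] [j|y] //= exy; rewrite !ffunE.
  - exact: neq_lift.
  - by rewrite eq_sym neq_lift.
  - by apply/negP => /eqP /lift_inj /eqP; apply/negP; apply: h.
move=> x y exy; have := h (inr x) (inr y) exy; rewrite !ffunE.
by apply: contra => /eqP ->.
Qed.

Lemma chi_pos (T : finType) (e : rel T) : simple_connected_graph e -> 0 < chi e.
Proof.
case=> _ irr /card_gt0P [x0 _] _.
have [c _] := chi_spec irr.
exact: (leq_ltn_trans (leq0n _) (ltn_ord (c x0))).
Qed.

Lemma decomp (T : finType) (e : rel T) t (c : {ffun ('I_t + T) -> 'I_(chi e).+1}) :
  simple_connected_graph e -> 0 < t -> proper (join_rel t e) c ->
  exists a cG, c = cH t a cG.
Proof.
move=> G tpos /properP pc.
have chipos := chi_pos G.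
case: G => sym irr Tpos _.
pose i0 : 'I_t := Ordinal tpos. pose a := c (inl i0).
have ha : forall x, c (inr x) != a by move=> x; rewrite eq_sym; apply: pc.
have hl : forall i, c (inl i) = a.
  move=> i; apply/eqP/negPn/negP => hb.
  have := @chi_comp T e _ (fun x => c (inr x)) (~: [set a; c (inl i)]) Tpos.
  have hC := cardsC [set a; c (inl i)]; rewrite cards2 eq_sym hb card_ord in hC.
  have key : chi e <= #|~: [set a; c (inl i)]| -> False by lia.
  move=> H; apply: key; apply: H.
    by move=> x; rewrite in_setC in_set2 negb_or ha /=; apply: pc.
  by move=> x y exy; apply: pc.
have hG : forall x, exists j, c (inr x) = lift a j.
  move=> x; case: (unliftP a (c (inr x))) (ha x) => [j ->|->]; last by rewrite eqxx.
  by exists j.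
have [cG hcG] := fin_all_exists hG.
exists a, [ffun x => cG x]; apply/ffunP => -[i|x]; by rewrite !ffunE //= ?hl ?hcG.
Qed.

Lemma chiH (T : finType) (e : rel T) t :
  simple_connected_graph e -> 0 < t -> chi (join_rel t e) = (chi e).+1.
Proof.
move=> G tpos; case: (G) => sym irr Tpos _.
apply/anti_leq/andP; split.
  have [cG pcG] := chi_spec irr.
  by apply: (@chi_le _ _ _ (cH t ord_max cG)); rewrite -proper_cH.
have irrH : irreflexive (join_rel t e) by move=> [i|x] //=.
have [d /properP pd] := chi_spec irrH.
pose a := d (inl (Ordinal tpos)).
have := @chi_comp T e _ (fun x => d (inr x)) [set~ a] Tpos.
rewrite cardsC1 card_ord.
have hlt := ltn_ord a.
have key : chi e <= (chi (join_rel t e)).-1 -> chi e < chi (join_rel t e) by lia.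
move=> H; apply: key; apply: H.
  by move=> x; rewrite in_setC1 eq_sym; apply: pd.
by move=> x y exy; apply: pd.
Qed.

Lemma inN_rr (T : finType) (e : rel T) t x y :
  inN (join_rel t e) (inr x) (inr y) = inN e x y.
Proof. by rewrite /inN /=. Qed.

Lemma rb_inr (T : finType) (e : rel T) t k (a : 'I_k.+1) (cG : {ffun T -> 'I_k})
  (F : {set 'I_t + T}) x :
  rainbow (join_rel t e) (cH t a cG) F (inr x) =
  [exists i, inl i \notin F] && rainbow e cG [set y | inr y \in F] x.
Proof.
apply/idP/andP.
  move/forallP => h; split.
    have /existsP [[i|y] /and3P [_ uF cu]] := h a.
      by apply/existsP; exists i.
    by rewrite ffunE eq_sym (negbTE (neq_lift _ _)) in cu.
  apply/forallP => j; have /existsP [[i|y] /and3P [hu uF cu]] := h (lift a j).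
    by rewrite ffunE (negbTE (neq_lift _ _)) in cu.
  apply/existsP; exists y; rewrite inE uF -(@inN_rr _ e t x y) hu /=.
  by rewrite ffunE (inj_eq lift_inj) in cu.
case => /existsP [i iF] /forallP h; apply/forallP => j.
case: (unliftP a j) => [j' ->|->].
  have /existsP [y /and3P [hy yF cy]] := h j'.
  apply/existsP; exists (inr y); rewrite ffunE (eqP cy) eqxx inN_rr hy.
  by rewrite inE in yF; rewrite yF.
by apply/existsP; exists (inl i); rewrite ffunE eqxx iF.
Qed.

Lemma rb_inl1 (T : finType) (e : rel T) t k (a : 'I_k.+1) (cG : {ffun T -> 'I_k})
  (F : {set 'I_t + T}) i :
  rainbow (join_rel t e) (cH t a cG) F (inl i) -> inl i \notin F.
Proof.
move/forallP/(_ a)/existsP => [[i'|y] /and3P [hu uF cu]].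
  by move: hu; rewrite /inN /= orbF => /eqP <-.
by rewrite ffunE eq_sym (negbTE (neq_lift _ _)) in cu.
Qed.

Lemma rb_inl2 (T : finType) (e : rel T) t k (a : 'I_k.+1) (cG : {ffun T -> 'I_k})
  (F : {set 'I_t + T}) i x :
  rainbow e cG [set y | inr y \in F] x -> inl i \notin F ->
  rainbow (join_rel t e) (cH t a cG) F (inl i).
Proof.
move=> /forallP h iF; apply/forallP => j.
case: (unliftP a j) => [j' ->|->].
  have /existsP [y /and3P [hy yF cy]] := h j'.
  apply/existsP; exists (inr y); rewrite ffunE (eqP cy) eqxx.
  by rewrite inE in yF; rewrite yF /inN /=.
by apply/existsP; exists (inl i); rewrite ffunE eqxx iF /inN eqxx.
Qed.

Lemma rcount_le (T : finType) (e : rel T) t k (a : 'I_k.+1) (cG : {ffun T -> 'I_k})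
  (F : {set 'I_t + T}) :
  rcount (join_rel t e) (cH t a cG) F <=
  #|[set i | inl i \notin F]| + rcount e cG [set y | inr y \in F].
Proof.
rewrite /rcount card_split; apply: leq_add; apply: subset_leq_card;
  apply/subsetP => ?; rewrite !inE; first exact: rb_inl1.
by rewrite rb_inr => /andP [_ ->].
Qed.

Lemma rcount_eq (T : finType) (e : rel T) t k (a : 'I_k.+1) (cG : {ffun T -> 'I_k})
  (F : {set 'I_t + T}) : 0 < t ->
  (forall i, inl i \notin F) -> 0 < rcount e cG [set y | inr y \in F] ->
  rcount (join_rel t e) (cH t a cG) F = t + rcount e cG [set y | inr y \in F].
Proof.
move=> tpos hF /card_gt0P [x]; rewrite inE => hx.
rewrite /rcount card_split; congr (_ + _).
  rewrite -[t in RHS]card_ord -cardsT; apply: eq_card => i.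
  by rewrite !inE; apply: rb_inl2 hx (hF i).
apply: eq_card => y; rewrite !inE rb_inr.
by have -> : [exists i, inl i \notin F] by apply/existsP; exists (Ordinal tpos).
Qed.

Lemma rcount_mono (T : finType) (e : rel T) k (c : {ffun T -> 'I_k}) F :
  rcount e c F <= rnum e c.
Proof.
apply: subset_leq_card; apply/subsetP => v; rewrite !inE.
move/forallP => h; apply/forallP => j; have /existsP [u /and3P [hu _ cu]] := h j.
by apply/existsP; exists u; rewrite hu in_set0 cu.
Qed.

Lemma key_fwd (T : finType) (e : rel T) t k (a : 'I_k.+1) (cG : {ffun T -> 'I_k})
  (F : {set 'I_t + T}) :
  rcount (join_rel t e) (cH t a cG) F = rnum e cG + t ->
  (forall i, inl i \notin F) /\ rcount e cG [set y | inr y \in F] = rnum e cG.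
Proof.
move=> h.
have h1 := @rcount_le T e t k a cG F.
have h2 := @rcount_mono T e k cG [set y | inr y \in F].
have h3 : #|[set i | inl i \notin F]| <= t by rewrite -[t in _ <= t]card_ord max_card.
have h4 : #|[set i | inl i \notin F]| = t by lia.
split; last by lia.
have : [set i | inl i \notin F] == setT.
  by rewrite eqEcard subsetT cardsT card_ord andTb; lia.
by move/eqP/setP => E i; have := E i; rewrite !inE.
Qed.

Lemma key_bwd (T : finType) (e : rel T) t k (a : 'I_k.+1) (cG : {ffun T -> 'I_k})
  (F : {set T}) : 0 < t -> 0 < rnum e cG ->
  rcount e cG F = rnum e cG ->
  rcount (join_rel t e) (cH t a cG) (inr @: F) = rnum e cG + t.
Proof.
move=> tpos rpos h.
have EF : forall S : {set T}, S =i F -> rcount e cG S = rcount e cG F.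
  by move=> S /setP ->.
have inj : injective (@inr 'I_t T) by move=> ? ? [].
rewrite rcount_eq //.
- rewrite EF ?h; first by rewrite addnC.
  by move=> y; rewrite inE mem_imset.
- by move=> i; apply/imsetP => -[y _].
- by rewrite EF ?h // => y; rewrite inE mem_imset.
Qed.

Lemma rnum_pos (T : finType) (e : rel T) (cG : {ffun T -> 'I_(chi e)}) :
  simple_connected_graph e -> proper e cG -> 0 < rnum e cG.
Proof.
move=> G pG; have [v hv] := rainbow_exists G pG.
by apply/card_gt0P; exists v; rewrite inE.
Qed.

Lemma rnumH (T : finType) (e : rel T) t (a : 'I_(chi e).+1)
  (cG : {ffun T -> 'I_(chi e)}) :
  simple_connected_graph e -> 0 < t -> proper e cG ->
  rnum (join_rel t e) (cH t a cG) = rnum e cG + t.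
Proof.
move=> G tpos pG.
have := @key_bwd T e t _ a cG set0 tpos (rnum_pos G pG) (erefl _).
by rewrite imset0.
Qed.

Lemma bigmin_attained (I : finType) (P : pred I) (F : I -> nat) idx :
  \big[minn/idx]_(i | P i) F i = idx \/
  exists2 i, P i & \big[minn/idx]_(i | P i) F i = F i.
Proof.
apply: (big_rec (fun x => x = idx \/ exists2 i, P i & x = F i)); first by left.
move=> i x Pi [->|[j Pj ->]].
  by rewrite /minn; case: ifP => _; [right; exists i | left].
by rewrite /minn; case: ifP => _; right; [exists i | exists j].
Qed.

Lemma bigmax_attained (I : finType) (P : pred I) (F : I -> nat) :
  \max_(i | P i) F i = 0 \/ exists2 i, P i & \max_(i | P i) F i = F i.
Proof.
apply: (big_rec (fun x => x = 0 \/ exists2 i, P i & x = F i)); first by left.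
move=> i x Pi [->|[j Pj ->]].
  by right; exists i; rewrite // maxn0.
by case: (leqP (F j) (F i)) => h; right; [exists i; rewrite // (maxn_idPl h) | exists j; rewrite // (maxn_idPr (ltnW h))].
Qed.

Lemma leq_bigmin (I : finType) (P : pred I) (F : I -> nat) idx x :
  x <= idx -> (forall i, P i -> x <= F i) -> x <= \big[minn/idx]_(i | P i) F i.
Proof. by move=> h1 h2; elim/big_rec: _ => // i y Pi hy; rewrite leq_min h2. Qed.

Definition rK (T : finType) (e : rel T) k :=
  \big[minn/#|T|]_(c : {ffun T -> 'I_k} | proper e c) rnum e c.
Definition rPK (T : finType) (e : rel T) k :=
  \max_(c : {ffun T -> 'I_k} | proper e c) rnum e c.
Definition fK (T : finType) (e : rel T) k R :=
  \max_(c : {ffun T -> 'I_k} | proper e c && (rnum e c == R))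
    \max_(F : {set T} | rcount e c F == R) #|F|.

Lemma rminusH (T : finType) (e : rel T) t :
  simple_connected_graph e -> 0 < t ->
  rminus (join_rel t e) = rminus e + t.
Proof.
move=> G tpos.
change (rK (join_rel t e) (chi (join_rel t e)) = rK e (chi e) + t).
rewrite chiH //.
apply/anti_leq/andP; split.
  case: (bigmin_attained (fun c : {ffun T -> 'I_(chi e)} => proper e c) (@rnum T e (chi e)) #|T|).
    rewrite /rK => ->; apply: leq_trans (bigmin_idx _ _ _).
    by rewrite card_sum card_ord addnC.
  move=> [cG pG]; rewrite /rK => ->.
  rewrite -(rnumH ord_max G tpos pG); apply: bigmin_le.
  by rewrite -proper_cH.
apply: leq_bigmin.
  by rewrite card_sum card_ord addnC leq_add2l; apply: bigmin_idx.
move=> c pc; have [a [cG E]] := decomp G tpos pc; subst c.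
have pG : proper e cG by rewrite (@proper_cH T e t _ a cG).
by rewrite rnumH // leq_add2r; apply: bigmin_le.
Qed.

Lemma rplusH (T : finType) (e : rel T) t :
  simple_connected_graph e -> 0 < t ->
  rplus (join_rel t e) = rplus e + t.
Proof.
move=> G tpos.
change (rPK (join_rel t e) (chi (join_rel t e)) = rPK e (chi e) + t).
rewrite chiH //.
apply/anti_leq/andP; split.
  apply/bigmax_leqP => c pc; have [a [cG E]] := decomp G tpos pc; subst c.
  have pG : proper e cG by rewrite (@proper_cH T e t _ a cG).
  by rewrite rnumH // leq_add2r; apply: leq_bigmax_cond.
case: (bigmax_attained (fun c : {ffun T -> 'I_(chi e)} => proper e c) (@rnum T e (chi e))).
  rewrite /rPK => ->; have [cG pG] := chi_spec (let: And4 _ irr _ _ := G in irr).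
  apply: leq_trans (leq_addl (rnum e cG) t) _.
  rewrite -(rnumH ord_max G tpos pG); apply: leq_bigmax_cond.
  by rewrite -proper_cH.
move=> [cG pG]; rewrite /rPK => ->.
rewrite -(rnumH ord_max G tpos pG); apply: leq_bigmax_cond.
by rewrite -proper_cH.
Qed.

Lemma fgen (T : finType) (e : rel T) t R :
  simple_connected_graph e -> 0 < t ->
  fK (join_rel t e) (chi e).+1 (R + t) = fK e (chi e) R.
Proof.
move=> G tpos.
apply/anti_leq/andP; split.
  apply/bigmax_leqP => c /andP [pc /eqP rc].
  have [a [cG E]] := decomp G tpos pc; subst c.
  have pG : proper e cG by rewrite (@proper_cH T e t _ a cG).
  have rG : rnum e cG = R by move: rc; rewrite rnumH //; lia.
  apply/bigmax_leqP => F /eqP rF.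
  rewrite -rG in rF; have [hF hR] := key_fwd rF.
  apply: (@leq_trans (\max_(F' : {set T} | rcount e cG F' == R) #|F'|)); last first.
    apply: (@leq_bigmax_cond _ _ (fun c : {ffun T -> 'I_(chi e)} =>
       \max_(F' : {set T} | rcount e c F' == R) #|F'|) cG).
    by rewrite pG rG eqxx.
  apply: (@leq_trans #|[set y | inr y \in F]|); last first.
    by apply: (@leq_bigmax_cond _ _ (fun F' : {set T} => #|F'|)); rewrite hR rG.
  have inj : injective (@inr 'I_t T) by move=> ? ? [].
  rewrite -(card_imset _ inj); apply: subset_leq_card; apply/subsetP => -[i|y] hu.
    by move: (hF i); rewrite hu.
  by apply/imsetP; exists y; rewrite ?inE.
apply/bigmax_leqP => cG /andP [pG /eqP rG].
apply: (@leq_trans (\max_(F : {set 'I_t + T} |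
     rcount (join_rel t e) (cH t ord_max cG) F == R + t) #|F|)); last first.
  apply: (@leq_bigmax_cond _ _ (fun c : {ffun 'I_t + T -> 'I_(chi e).+1} =>
       \max_(F : {set 'I_t + T} | rcount (join_rel t e) c F == R + t) #|F|)
       (cH t ord_max cG)).
  by rewrite -proper_cH pG rnumH // rG eqxx.
apply/bigmax_leqP => F /eqP rF.
have inj : injective (@inr 'I_t T) by move=> ? ? [].
rewrite -(card_imset _ inj).
apply: (@leq_bigmax_cond _ _ (fun F : {set 'I_t + T} => #|F|)).
rewrite key_bwd ?rG //; by rewrite -rG; apply: rnum_pos.

Qed.

Theorem mainTheorem9 (T : finType) (e : rel T) (t : nat) :
  simple_connected_graph e -> 1 <= t ->
  fminus (join_rel t e) = fminus e /\ fplus (join_rel t e) = fplus e.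
Proof.
move=> G tpos; split.
  change (fK (join_rel t e) (chi (join_rel t e)) (rminus (join_rel t e)) =
          fK e (chi e) (rminus e)).
  by rewrite rminusH // chiH // fgen.
change (fK (join_rel t e) (chi (join_rel t e)) (rplus (join_rel t e)) =
        fK e (chi e) (rplus e)).
by rewrite rplusH // chiH // fgen.
Qed.
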